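(* There is no function $g:\mathbb{N}\to\mathbb{N}$ such that $\operatorname{dbw}(H)\le g(\operatorname{dbw}(J))$ for every digraph $J$ and every directed topological minor $H$ of $J$.
   Context: All digraphs are finite and loopless. Contracting an edge $\vec{xy}$ of $D$ removes $\vec{xy}$, $x$, $y$ and adds a new vertex with in-neighbourhood $(N^-(x)\cup N^-(y))\setminus\{x,y\}$ and out-neighbourhood $(N^+(x)\cup N^+(y))\setminus\{x,y\}$. Let $V_3(D)$ be the set of vertices incident with at least three edges. An edge $\vec{xy}$ is 2-contractible in $D$ if $\{x,y\}\not\subseteq V_3(D)$ and either $\vec{yx}\in E(D)$ or there is no pair $(w,z)$ of vertices of $V_3(D)$ (possibly $w=z$) such that $x$ can reach $w$ and $z$ can reach $y$ by directed paths in $D-\vec{xy}$. $H$ is a directed topological minor of $D$ if $H$ is obtained from a subgraph of $D$ by a sequence of contractions of 2-contractible edges. Directed branch-width: for $X\subseteq E(D)$, $S^V_X=\{y: \exists x,z,\ \vec{xy}\in E(D)\setminus X,\ \vec{yz}\in X\}$; $\operatorname{dbw}(D)$ is the minimum over $(T,\beta)$ ($T$ a tree of maximum degree at most three, $\beta$ a bijection from leaves onto $E(D)$) of the maximum over tree edges of $|S^V_{\beta(Y)}\cup S^V_{E(D)\setminus\beta(Y)}|$, $Y$ the leaves on one side (0 if no tree edges). *)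

(* Defs.v *)
From Stdlib Require Import ClassicalEpsilon.
From mathcomp Require Import all_boot.
Set Implicit Arguments. Unset Strict Implicit. Unset Printing Implicit Defensive.

Record digraph (T : finType) := Digraph { dv : {set T}; de : {set T * T} }.

Definition wf (T : finType) (D : digraph T) : bool :=
  (de D \subset setX (dv D) (dv D)) && [forall v, (v, v) \notin de D].

Definition subgraph (T : finType) (D0 D : digraph T) : bool :=
  [&& wf D0, dv D0 \subset dv D & de D0 \subset de D].

(* contraction of the arc xy: the merged vertex is represented by x;
   its in/out-neighbourhoods are the unions, minus {x,y}. *)
Definition contract (T : finType) (D : digraph T) (x y : T) : digraph T :=
  let f := fun v => if v == y then x else v in
  Digraph (dv D :\ y)
          [set (f p.1, f p.2) | p in [set p in de D | f p.1 != f p.2]].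

Definition V3 (T : finType) (D : digraph T) : {set T} :=
  [set v in dv D | 2 < #|[set p in de D | (p.1 == v) || (p.2 == v)]|].

Definition arc_minus (T : finType) (D : digraph T) (x y : T) : rel T :=
  fun u v => ((u, v) \in de D) && ((u, v) != (x, y)).

Definition two_contractible (T : finType) (D : digraph T) (x y : T) : bool :=
  ~~ ((x \in V3 D) && (y \in V3 D)) &&
  (((y, x) \in de D) ||
   ~~ [exists w, exists z,
        [&& w \in V3 D, z \in V3 D,
            connect (arc_minus D x y) x w & connect (arc_minus D x y) z y]]).

Inductive contracts_to (T : finType) : digraph T -> digraph T -> Prop :=
| ct_refl D : contracts_to D D
| ct_step D x y D' : (x, y) \in de D -> two_contractible D x y ->
    contracts_to (contract D x y) D' -> contracts_to D D'.

Definition isomorphic (T' T : finType) (H : digraph T') (D : digraph T) : Prop :=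
  exists f : T' -> T,
    [/\ {in dv H &, injective f}, f @: dv H = dv D &
        {in dv H &, forall u v, ((u, v) \in de H) = ((f u, f v) \in de D)}].

Definition dtop_minor (T' T : finType) (H : digraph T') (J : digraph T) : Prop :=
  exists D0 D1 : digraph T, subgraph D0 J /\ contracts_to D0 D1 /\ isomorphic H D1.

Definition SV (T : finType) (E X : {set T * T}) : {set T} :=
  [set v | [exists u, exists w, ((u, v) \in E :\: X) && ((v, w) \in X)]].

Definition is_subcubic_tree (U : finType) (t : rel U) : Prop :=
  [/\ symmetric t, irreflexive t,
      (forall a b, connect t a b),
      (forall a b, t a b ->
         ~~ connect (fun u v => t u v && ~~ (((u == a) && (v == b)) || ((u == b) && (v == a)))) a b)
    & (forall u, #|[set v | t u v]| <= 3)].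

Definition leaves (U : finType) (t : rel U) : {set U} :=
  [set u | #|[set v | t u v]| <= 1].

(* leaves on the side of a when the tree edge ab is removed *)
Definition side (U : finType) (t : rel U) (a b : U) : {set U} :=
  [set u in leaves t |
    connect (fun u v => t u v && ~~ (((u == a) && (v == b)) || ((u == b) && (v == a)))) a u].

Definition dbw_le (T : finType) (D : digraph T) (k : nat) : Prop :=
  de D = set0 \/
  exists (U : finType) (t : rel U) (beta : U -> T * T),
    [/\ is_subcubic_tree t, {in leaves t &, injective beta},
        beta @: leaves t = de D &
        forall a b, t a b ->
          let X := beta @: side t a b in
          #|SV (de D) X :|: SV (de D) (de D :\: X)| <= k].

Definition dbw (T : finType) (D : digraph T) : nat :=
  epsilon (inhabits 0%N)
    (fun k => dbw_le D k /\ forall j, dbw_le D j -> (k <= j)%N).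

(* Main.v *)
Require Import Defs.
From Stdlib Require Import ClassicalEpsilon Classical.
From mathcomp Require Import all_boot zify.
Set Implicit Arguments. Unset Strict Implicit. Unset Printing Implicit Defensive.

Lemma dbw_spec (T : finType) (D : digraph T) k0 : dbw_le D k0 ->
  dbw_le D (dbw D) /\ forall j, dbw_le D j -> dbw D <= j.
Proof.
move=> H0.
have ex : exists k, dbw_le D k /\ forall j, dbw_le D j -> k <= j.
  elim: k0 {-2}k0 (leqnn k0) H0 => [|n IH] k Hk Hd.
    exists k; split=> // j _; by move: Hk; rewrite leqn0 => /eqP->.
  case: (classic (exists j, j < k /\ dbw_le D j)) => [[j [Hj Hdj]]|Hn].
    by apply: (IH j) => //; rewrite -ltnS (leq_trans Hj Hk).
  exists k; split=> // j Hdj; rewrite leqNgt; apply/negP => Hjk.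
  by apply: Hn; exists j.
exact: (epsilon_spec (inhabits 0) _ ex).
Qed.

Section Tree.
Variables (U : finType) (t : rel U).
Hypothesis tr : is_subcubic_tree t.

Definition avoid (a b : U) : rel U :=
  fun u v => t u v && ~~ (((u == a) && (v == b)) || ((u == b) && (v == a))).

Definition comp a b := [set u | connect (avoid a b) a u].

Lemma t_sym : symmetric t. Proof. by case: tr. Qed.
Lemma t_irr : irreflexive t. Proof. by case: tr. Qed.

Lemma avoidC a b : avoid a b =2 avoid b a.
Proof. by move=> u v; rewrite /avoid orbC. Qed.

Lemma avoid_sym a b : symmetric (avoid a b).
Proof.
move=> u v; rewrite /avoid t_sym; congr (_ && ~~ _).
by rewrite orbC; case: (u == a) (v == b) (u == b) (v == a) => [] [] [] [].
Qed.

Lemma csym a b u v : connect (avoid a b) u v = connect (avoid a b) v u.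
Proof. exact: (sym_connect_sym (avoid_sym a b)). Qed.

Lemma no_back a b : t a b -> ~~ connect (avoid a b) a b.
Proof. by case: tr => _ _ _ H _ /H. Qed.

Lemma in_side a b u : (u \in side t a b) = (u \in leaves t) && connect (avoid a b) a u.
Proof. by rewrite inE. Qed.

Lemma first_step c u : connect t c u -> u != c ->
  exists2 d, t c d & connect (avoid d c) d u.
Proof.
move=> /connectP[p pp ->] Hne.
case: (shortenP pp) Hne => [[|d p'] pp' up' _] //=; first by rewrite eqxx.
move=> _; case/andP: pp' => tcd pp'; exists d => //.
apply/connectP; exists p' => //.
have cnot : c \notin d :: p' by case/andP: up'.
apply: (@sub_in_path _ (predC1 c) t); last by [].
  move=> x y; rewrite !inE => xc yc txy.
  by rewrite /avoid txy (negbTE xc) (negbTE yc) /= !andbF.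
by apply/allP => x xin; rewrite inE; apply/eqP => xc; rewrite -xc xin in cnot.
Qed.

Lemma cover c : leaves t \subset c |: \bigcup_(d | t c d) side t d c.
Proof.
apply/subsetP => u ul; rewrite !inE; case: eqP => //= /eqP Hne.
case: tr => _ _ conn _ _.
have [d tcd cdu] := first_step (conn c u) Hne.
by apply/bigcupP; exists d => //; rewrite in_side ul.
Qed.

Lemma disj a b : t a b -> [disjoint side t a b & side t b a].
Proof.
move=> tab; apply/pred0P => u /=; apply/negP => /andP [].
rewrite !in_side => /andP[_ au] /andP[_ bu].
have := no_back tab; rewrite (connect_trans au) //.
by rewrite csym (eq_connect (avoidC a b) b u). 
Qed.

Lemma comp_proper b c d : t b c -> t c d -> d != b -> comp d c \proper comp c b.
Proof.
move=> tbc tcd db.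
have nc : forall p, path (avoid d c) d p -> c \notin d :: p.
  move=> p pp; apply/negP => cin.
  have := path_connect pp cin => dc.
  have := no_back tcd; rewrite csym (eq_connect (avoidC c d)) dc //.
have cd : c != d by apply/eqP => E; move: tcd; rewrite E t_irr.
have bc : b != c by apply/eqP => E; move: tbc; rewrite E t_irr.
apply/properP; split.
  apply/subsetP => u; rewrite !inE => /connectP [p pp ->].
  apply: (connect_trans (y := d)).
    apply: connect1; rewrite /avoid tcd /= (negbTE db) (eq_sym c b) (negbTE bc) /=.
    by rewrite andbF.
  apply/connectP; exists p => //.
  apply: (@sub_in_path _ (predC1 c) (avoid d c)); last by [].
    move=> x y; rewrite !inE => xc yc /andP[txy _].
    by rewrite /avoid txy (negbTE xc) (negbTE yc) /= !andbF.
  apply/allP => x xin; rewrite inE; apply/eqP => xc.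
  by have := nc p pp; rewrite -xc xin.
exists c; first by rewrite inE connect0.
rewrite inE; apply/negP => dc.
have := no_back tcd; rewrite csym (eq_connect (avoidC c d)) dc //.
Qed.


Lemma card_bigcup_sum (I : finType) (P : pred I) (F : I -> {set U}) :
  #|\bigcup_(i | P i) F i| <= \sum_(i | P i) #|F i|.
Proof.
elim/big_rec2: _ => [|i n S _ IH]; first by rewrite cards0.
by rewrite (leq_trans (leq_card_setU _ _)) // leq_add2l.
Qed.

Lemma cover_bound c c0 : (forall d, t c d -> #|side t d c| <= c0) ->
  #|leaves t| <= 3 * c0 + 1.
Proof.
move=> H.
have h1 := subset_leq_card (cover c).
have h2 := leq_card_setU [set c] (\bigcup_(d | t c d) side t d c).
have h3 := card_bigcup_sum (fun d => t c d) (fun d => side t d c).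
have h4 : \sum_(d | t c d) #|side t d c| <= \sum_(d | t c d) c0 by apply: leq_sum.
rewrite sum_nat_const in h4.
have h5 : #|[set v | t c v]| <= 3 by case: tr.
rewrite cardsE in h5.
rewrite cards1 in h2.
have h6 : #|(fun d => t c d)| * c0 <= 3 * c0 by rewrite leq_mul2r h5 orbT.
rewrite (leq_trans h1) // (leq_trans h2) // addnC leq_add2r (leq_trans h3) // (leq_trans h4) //.
Qed.

Lemma balance c0 : 3 * c0 + 1 < #|leaves t| ->
  (forall a b, t a b -> #|side t a b| <= c0 \/ #|leaves t| - #|side t a b| <= c0) -> False.
Proof.
move=> Hm Hedge.
have [u0 _] : exists u, u \in leaves t.
  by apply/set0Pn; rewrite -card_gt0 (leq_trans _ Hm).
pose P := [pred bc : U * U | t bc.1 bc.2 && (c0 < #|side t bc.2 bc.1|)].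
have [bc0 Pbc0] : exists bc, P bc.
  case: (boolP [exists bc, P bc]) => [/existsP//|/existsPn H].
  have := @cover_bound u0 c0.
  have: ~~ (#|leaves t| <= 3 * c0 + 1) by rewrite -ltnNge.
  move=> /negP Hn Hc; exfalso; apply: Hn; apply: Hc => d tu0d.
  by have := H (u0, d); rewrite /= tu0d /= -leqNgt.
case: (arg_minnP (fun bc => #|comp bc.2 bc.1|) Pbc0) => [[b c]] /andP[/= tbc big] Hmin.
have : #|leaves t| <= 3 * c0 + 1.
  apply: (@cover_bound c) => d tcd.
  case: (eqVneq d b) => [->|db].
    case: (Hedge b c tbc) => // H2.
    have := disj tbc; rewrite -leq_card_setU => /eqP Hu.
    have : #|side t b c :|: side t c b| <= #|leaves t|.
      by apply: subset_leq_card; apply/subsetP => u; rewrite !inE => /orP[] /andP[].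
    rewrite Hu => Hs. exfalso.
    lia.
  rewrite leqNgt; apply/negP => Hd.
  have := Hmin (c, d); rewrite /= tcd Hd => /(_ isT) Hle.
  have := proper_card (comp_proper tbc tcd db).
  by rewrite ltnNge Hle.
by rewrite leqNgt Hm.
Qed.

End Tree.


Lemma connect_inv (U : finType) (e : rel U) (Q : pred U) x y :
  (forall u v, Q u -> e u v -> Q v) -> connect e x y -> Q x -> Q y.
Proof.
move=> HQ /connectP[p pp ->]; elim: p x pp => //= z p IH x /andP[exz pz] Qx.
by apply: IH => //; apply: HQ exz.
Qed.

Section Cat.
Variable m : nat.
Hypothesis m2 : 1 < m.
Definition CU := ('I_m + 'I_m)%type.

Definition idx (u : CU) : nat := match u with inl k => k | inr k => k end.

Definition cat : rel CU := fun u v =>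
  match u, v with
  | inl k, inl l => (k.+1 == l :> nat) || (l.+1 == k :> nat)
  | inl k, inr l => k == l
  | inr l, inl k => k == l
  | inr _, inr _ => false
  end.

Lemma ord_eq n (p k : 'I_n) : (p == k) = (nat_of_ord p == nat_of_ord k). Proof. by []. Qed.

Lemma eq_inl (p k : 'I_m) : (inl p == inl k :> CU) = (p == k).
Proof. by apply/eqP/eqP => [[]|->]. Qed.
Lemma eq_inr (p k : 'I_m) : (inr p == inr k :> CU) = (p == k).
Proof. by apply/eqP/eqP => [[]|->]. Qed.
Lemma eq_lr (p k : 'I_m) : (inl p == inr k :> CU) = false.
Proof. by apply/eqP. Qed.
Lemma eq_rl (p k : 'I_m) : (inr p == inl k :> CU) = false.
Proof. by apply/eqP. Qed.

Lemma cat_sym : symmetric cat.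
Proof. case=> k [] l. 
- rewrite /cat. by rewrite orbC.
- by rewrite /cat eq_sym.
- by rewrite /cat eq_sym.
- by [].
Qed.

Lemma cat_irr : irreflexive cat.
Proof. case=> k; rewrite /cat //. by apply/negP => /orP[] /eqP; lia. Qed.

Lemma cat_conn a b : connect cat a b.
Proof.
have h0 : 0 < m by lia.
have hl : forall k (Hk : k < m), connect cat (inl (Ordinal h0)) (inl (Ordinal Hk)).
  elim=> [|k IH] Hk; first by rewrite (@eq_connect0 _ _ _ (inl (Ordinal Hk))) //; congr inl; apply: val_inj.
  have Hk' : k < m by lia.
  apply: connect_trans (IH Hk') _; apply: connect1 => /=; by rewrite eqxx.
have ha : forall a, connect cat (inl (Ordinal h0)) a.
  case=> [[k Hk]|[k Hk]]; first exact: hl.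
  apply: connect_trans (hl k Hk) _; apply: connect1 => /=; by rewrite eqxx.
apply: connect_trans (ha b); rewrite (sym_connect_sym cat_sym); exact: ha.
Qed.

Ltac stepsolve := move=> [p|p] [q|q]; rewrite /cat /idx ?eq_inl ?eq_inr ?eq_lr ?eq_rl ?ord_eq //=;
  lia.

Lemma cat_noback a b : cat a b ->
  ~~ connect (fun u v => cat u v && ~~ (((u == a) && (v == b)) || ((u == b) && (v == a)))) a b.
Proof.
case: a => k; case: b => l; rewrite /cat // => H; apply/negP => C.
- case/orP: H => /eqP H.
  + suff : idx (inl l : CU) <= k by rewrite /idx; lia.
    apply: (@connect_inv _ _ (fun u => idx u <= k) _ _ _ C); last by rewrite /idx.
    move=> [p|p] [q|q] /=; rewrite ?eq_inl ?eq_inr ?eq_lr ?eq_rl ?ord_eq //; lia.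
  + suff : k <= idx (inl l : CU) by rewrite /idx; lia.
    apply: (@connect_inv _ _ (fun u => k <= idx u) _ _ _ C); last by rewrite /idx.
    move=> [p|p] [q|q] /=; rewrite ?eq_inl ?eq_inr ?eq_lr ?eq_rl ?ord_eq //; lia.
- suff : inr l != inr l :> CU by rewrite eqxx.
  apply: (@connect_inv _ _ (fun u => u != inr l) _ _ _ C); last by rewrite eq_lr.
  move=> [p|p] [q|q] /=; rewrite ?eq_inl ?eq_inr ?eq_lr ?eq_rl ?ord_eq //; move: H; rewrite ord_eq; lia.
- suff : inl l == inr k :> CU by rewrite eq_lr.
  apply: (@connect_inv _ _ (fun u => u == inr k) _ _ _ C); last by rewrite eqxx.
  move=> [p|p] [q|q] /=; rewrite ?eq_inl ?eq_inr ?eq_lr ?eq_rl ?ord_eq //; move: H; rewrite ord_eq; lia.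
Qed.

Definition hdeg (n : nat) (v : CU) : 'I_3 := match v with inr _ => ord0
  | inl q => if n < q then (@Ordinal 3 1 isT) else (@Ordinal 3 2 isT) end.

Lemma cat_deg u : #|[set v | cat u v]| <= 3.
Proof.
rewrite -(@card_in_imset _ _ (hdeg (idx u))); first by rewrite (leq_trans (max_card _)) ?card_ord.
move=> v1 v2; rewrite !inE; case: u => k; case: v1 => p; case: v2 => q;
  rewrite /cat /hdeg /idx // => H1 H2.
- by case: (ltnP k p) => Hp; case: (ltnP k q) => Hq => /(congr1 val) /= E;
    congr inl; apply: val_inj; move: H1 H2; rewrite /= ?ord_eq; lia.
- by case: ifP.
- by case: ifP.
- by move=> _; congr inr; apply: val_inj; move: H1 H2; rewrite /= ?ord_eq; lia.
- by move=> _; congr inl; apply: val_inj; move: H1 H2; rewrite /= ?ord_eq; lia.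
Qed.

Lemma cat_leaves u : (u \in leaves cat) = (if u is inr _ then true else false).
Proof.
rewrite inE; case: u => k.
- have [q Hq] : exists q : 'I_m, (k.+1 == q :> nat) || (q.+1 == k :> nat).
    case: (ltnP k.+1 m) => Hk; first by exists (Ordinal Hk); rewrite eqxx.
    have := ltn_ord k => Hk0.
    have Hk' : k.-1 < m by lia.
    by exists (Ordinal Hk'); apply/orP; right => /=; apply/eqP; lia.
  apply/negbTE; rewrite -ltnNge.
  have -> : 2 = #|[set (inr k : CU); inl q]| by rewrite cards2.
  apply: subset_leq_card; apply/subsetP => v; rewrite !inE => /orP[] /eqP ->;
    rewrite /cat //=; exact: eqxx.
- rewrite (leq_trans (subset_leq_card (B := [set (inl k : CU)]) _)) ?cards1 //.
  apply/subsetP => v; rewrite !inE; case: v => q; rewrite /cat //.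
Qed.

Lemma cat_tree : is_subcubic_tree cat.
Proof.
split; [exact: cat_sym|exact: cat_irr|exact: cat_conn|exact: cat_noback|exact: cat_deg].
Qed.

End Cat.

Lemma caterpillar (X : finType) (E : {set X}) : 1 < #|E| ->
  exists (U : finType) (t : rel U) (beta : U -> X),
    [/\ is_subcubic_tree t, {in leaves t &, injective beta} & beta @: leaves t = E].
Proof.
move=> E2.
have [x0 _] : exists x, x \in E by apply/set0Pn; rewrite -card_gt0 ltnW.
pose m := #|E|.
exists (CU m), (@cat m), (fun u => nth x0 (enum E) (idx u)).
split; first exact: cat_tree.
- move=> [p|p] [q|q]; rewrite !cat_leaves // => _ _ E1.
  congr inr; apply: val_inj => /=.
  move: E1; rewrite /idx => /eqP; rewrite nth_uniq ?enum_uniq // -?cardE ?ltn_ord //.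
  by move/eqP.
- apply/setP => e; apply/imsetP/idP => [[u ul ->]|eE].
  + by rewrite -mem_enum mem_nth // -cardE /idx; case: u {ul} => k; exact: ltn_ord.
  + have Hi : index e (enum E) < m by rewrite /m cardE index_mem mem_enum.
    exists (inr (Ordinal Hi) : CU m); first by rewrite cat_leaves.
    by rewrite /idx /= nth_index // mem_enum.
Qed.


Section G.
Variable n : nat.
Definition VT := ('I_6 * 'I_n)%type.
Definition kA : 'I_6 := @Ordinal 6 0 isT.
Definition kY : 'I_6 := @Ordinal 6 1 isT.
Definition kW : 'I_6 := @Ordinal 6 2 isT.
Definition kB : 'I_6 := @Ordinal 6 3 isT.
Definition kX : 'I_6 := @Ordinal 6 4 isT.
Definition kV : 'I_6 := @Ordinal 6 5 isT.

Definition arcP (S R : {set 'I_n}) (u v : VT) : bool :=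
  [|| (u.1 == kA) && (v.1 == kB) && (v.2 \notin R),
      (u.1 == kA) && (v.1 == kX) && (v.2 \in R),
      (u.1 == kA) && (v.1 == kY) && (u.2 == v.2) && (u.2 \notin S),
      (u.1 == kW) && (v.1 == kY) && (u.2 == v.2) && (u.2 \notin S),
      (u.1 == kW) && (v.1 == kA) && (u.2 == v.2) && (u.2 \in S),
      (u.1 == kX) && (v.1 == kB) && (u.2 == v.2) && (u.2 \notin R)
    | (u.1 == kX) && (v.1 == kV) && (u.2 == v.2)].

Definition vP (S R : {set 'I_n}) (v : VT) : bool :=
  ~~ ((v.1 == kY) && (v.2 \in S)) && ~~ ((v.1 == kB) && (v.2 \in R)).

Definition Gd S R : digraph VT := Digraph [set v | vP S R v] [set p | arcP S R p.1 p.2].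

Lemma contract_Y (S R : {set 'I_n}) (i : 'I_n) : i \notin S ->
  contract (Gd S R) (kA, i) (kY, i) = Gd (i |: S) R.
Proof.
move=> iS; rewrite /contract /Gd /=; congr Digraph.
  apply/setP => [[k j]]; rewrite !inE /vP /= xpair_eqE.
  case: k => [[|[|[|[|[|[|?]]]]]] ?] //=; rewrite ?andbT ?andbF //=.
  by rewrite in_setU1 negb_or.
apply/setP => [[u v]]; rewrite inE; apply/imsetP/idP.
- case=> [[[k1 j1] [k2 j2]]]; rewrite !inE /= => /andP[Hp Hf] [-> ->].
  move: Hp Hf; rewrite /arcP /= !xpair_eqE.
  case: k1 => [[|[|[|[|[|[|?]]]]]] ?] //=; case: k2 => [[|[|[|[|[|[|?]]]]]] ?] //=;
   rewrite ?andbT ?andbF ?orbF //=.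
  1-3: case: (j2 =P i) => [->|/eqP ne2]; case: (j1 =P i) => [->|/eqP ne1];
     rewrite /= ?xpair_eqE ?in_setU1 ?eqxx ?(negbTE iS) ?(negbTE ne1) ?(negbTE ne2) //=.
  all: try by rewrite ?andbF ?andbT ?orbF ?[i == _]eq_sym ?(negbTE ne2) //; move=> ->.
move=> H.
case: (boolP [&& u.1 == kW, v.1 == kA & u.2 == i]) => [/and3P[/eqP e1 /eqP e2 /eqP e3]|Hn].
  exists ((kW,i),(kY,i)).
    by rewrite !inE /arcP /= iS eqxx /= !xpair_eqE /= !eqxx.
  move: H; case: u v e1 e2 e3 => [k1 j1] [k2 j2] /= -> -> ->.
  by rewrite /arcP /= in_setU1 eqxx /= !xpair_eqE /= !eqxx /= ?orbF ?andbT => /eqP <-.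
exists (u, v); move: H Hn; case: u v => [k1 j1] [k2 j2];
  rewrite ?inE /arcP /= ?xpair_eqE /=;
  case: k1 => [[|[|[|[|[|[|?]]]]]] ?] //=; case: k2 => [[|[|[|[|[|[|?]]]]]] ?] //=;
   rewrite ?andbT ?andbF ?orbF ?in_setU1 //=.
all: move=> /andP[/eqP <- H1] H2; move: H1 H2; case: (j1 =P i) => [->|/eqP ne] //=;
  rewrite ?eqxx ?(negbTE ne) /= ?xpair_eqE ?andbT //=.
Qed.
Lemma contract_X (S R : {set 'I_n}) (i : 'I_n) : i \notin R ->
  contract (Gd S R) (kX, i) (kB, i) = Gd S (i |: R).
Proof.
move=> iS; rewrite /contract /Gd /=; congr Digraph.
  apply/setP => [[k j]]; rewrite !inE /vP /= xpair_eqE.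
  case: k => [[|[|[|[|[|[|?]]]]]] ?] //=; rewrite ?andbT ?andbF //=.
  by rewrite in_setU1 negb_or.
apply/setP => [[u v]]; rewrite inE; apply/imsetP/idP.
- case=> [[[k1 j1] [k2 j2]]]; rewrite !inE /= => /andP[Hp Hf] [-> ->].
  move: Hp Hf; rewrite /arcP /= !xpair_eqE.
  case: k1 => [[|[|[|[|[|[|?]]]]]] ?] //=; case: k2 => [[|[|[|[|[|[|?]]]]]] ?] //=;
   rewrite ?andbT ?andbF ?orbF //=.
  1-3: case: (j2 =P i) => [E2|/eqP ne2]; case: (j1 =P i) => [E1|/eqP ne1]; rewrite ?E1 ?E2;
     rewrite /= ?xpair_eqE ?in_setU1 ?eqxx ?(negbTE iS) ?(negbTE ne1) ?(negbTE ne2) //=.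
  all: try by rewrite ?andbF ?andbT ?orbF ?orbT ?[i == _]eq_sym ?(negbTE ne2) //; move=> ->.
move=> H.
case: (boolP [&& u.1 == kA, v.1 == kX & v.2 == i]) => [/and3P[/eqP e1 /eqP e2 /eqP e3]|Hn].
  exists ((kA,u.2),(kB,i)).
    by rewrite !inE /arcP /= iS eqxx /= ?xpair_eqE /= ?eqxx /= ?andbF.
  move: H; case: u v e1 e2 e3 => [k1 j1] [k2 j2] /= -> -> ->.
  by rewrite /arcP /= !xpair_eqE /= !eqxx /= ?andbF.
exists (u, v); move: H Hn; case: u v => [k1 j1] [k2 j2];
  rewrite ?inE /arcP /= ?xpair_eqE /=;
  case: k1 => [[|[|[|[|[|[|?]]]]]] ?] //=; case: k2 => [[|[|[|[|[|[|?]]]]]] ?] //=;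
   rewrite ?andbT ?andbF ?orbF ?in_setU1 //=.
all: case: (j2 =P i) => [E2|/eqP ne2]; rewrite ?E2 ?eqxx ?(negbTE ne2) /= ?xpair_eqE ?andbT ?orbF //=.
all: by case/andP=> /eqP -> /=; rewrite ?eqxx //= ?negb_or => /andP[].
Qed.

Ltac fixk := repeat match goal with
  | |- context[@Ordinal 6 0 ?p] => rewrite (_ : @Ordinal 6 0 p = kA); last exact: val_inj
  | |- context[@Ordinal 6 1 ?p] => rewrite (_ : @Ordinal 6 1 p = kY); last exact: val_inj
  | |- context[@Ordinal 6 2 ?p] => rewrite (_ : @Ordinal 6 2 p = kW); last exact: val_inj
  | |- context[@Ordinal 6 3 ?p] => rewrite (_ : @Ordinal 6 3 p = kB); last exact: val_inj
  | |- context[@Ordinal 6 4 ?p] => rewrite (_ : @Ordinal 6 4 p = kX); last exact: val_inj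
  | |- context[@Ordinal 6 5 ?p] => rewrite (_ : @Ordinal 6 5 p = kV); last exact: val_inj
  end.

Ltac kb k := case: k => [[|[|[|[|[|[|?]]]]]] ?] //=.

Lemma notV3 (T : finType) (D : digraph T) v (e1 e2 : T * T) :
  [set p in de D | (p.1 == v) || (p.2 == v)] \subset [set e1; e2] -> v \notin V3 D.
Proof.
move=> Hs; rewrite inE negb_and -leqNgt; apply/orP; right.
by rewrite (leq_trans (subset_leq_card Hs)) // cards2; case: (e1 != e2).
Qed.

Lemma connect_back (T : finType) (e : rel T) (Q : pred T) x y :
  (forall u v, e u v -> Q v -> Q u) -> connect e x y -> Q y -> Q x.
Proof.
move=> HQ /connectP[p pp ->]; elim: p x pp => //= z p IH x /andP[exz pz] Ql.
by apply: HQ exz _; apply: IH.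
Qed.

Lemma tcY (S R : {set 'I_n}) (i : 'I_n) : i \notin S ->
  two_contractible (Gd S R) (kA, i) (kY, i).
Proof.
move=> iS.
have nY : (kY, i) \notin V3 (Gd S R).
  apply: (@notV3 _ _ _ ((kA,i),(kY,i)) ((kW,i),(kY,i))).
  apply/subsetP => [[[k1 j1] [k2 j2]]]; rewrite !inE /arcP /= ?xpair_eqE.
  kb k1; kb k2; rewrite ?andbF ?andbT ?orbF //=.
  1-2: by case/andP => /andP[/eqP -> _] /eqP ->; rewrite eqxx.
have nW : (kW, i) \notin V3 (Gd S R).
  apply: (@notV3 _ _ _ ((kW,i),(kY,i)) ((kW,i),(kY,i))).
  apply/subsetP => [[[k1 j1] [k2 j2]]]; rewrite !inE /arcP /= ?xpair_eqE.
  kb k1; kb k2; rewrite ?andbF ?andbT ?orbF //=.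
  - by case/andP => /andP[_ H] /eqP E; move: H; rewrite E (negbTE iS).
  - by case/andP => /andP[/eqP <- _] ->.
rewrite /two_contractible (negbTE nY) andbF /=; apply/orP; right.
apply/existsP => [[w /existsP [z /and4P[_ Hz _ Cz]]]].
have : (z == (kY,i)) || (z == (kW,i)).
  apply: (@connect_back _ _ (fun z => (z == (kY,i)) || (z == (kW,i))) _ _ _ Cz); last by rewrite eqxx.
  move=> [k1 j1] [k2 j2]; rewrite /arc_minus !inE /arcP /= ?xpair_eqE.
  kb k1; kb k2; rewrite ?andbF ?andbT ?orbF //=.
  - by case/andP => /andP[/eqP -> _] H /eqP E; move: H; rewrite E eqxx.
  - by case/andP => /eqP -> _.
by case/orP => /eqP E; move: Hz; rewrite E ?(negbTE nY) ?(negbTE nW).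
Qed.

Lemma tcX (S R : {set 'I_n}) (i : 'I_n) : i \notin R ->
  two_contractible (Gd S R) (kX, i) (kB, i).
Proof.
move=> iR.
have nX : (kX, i) \notin V3 (Gd S R).
  apply: (@notV3 _ _ _ ((kX,i),(kB,i)) ((kX,i),(kV,i))).
  apply/subsetP => [[[k1 j1] [k2 j2]]]; rewrite !inE /arcP /= ?xpair_eqE.
  kb k1; kb k2; rewrite ?andbF ?andbT ?orbF //=.
  - by case/andP => H /eqP E; move: H; rewrite E (negbTE iR).
  - by case/andP => /andP[/eqP <- _] ->.
  - by case/andP => /eqP <- ->.
have nV : (kV, i) \notin V3 (Gd S R).
  apply: (@notV3 _ _ _ ((kX,i),(kV,i)) ((kX,i),(kV,i))).
  apply/subsetP => [[[k1 j1] [k2 j2]]]; rewrite !inE /arcP /= ?xpair_eqE.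
  kb k1; kb k2; rewrite ?andbF ?andbT ?orbF //=.
  by case/andP => /eqP -> ->.
rewrite /two_contractible (negbTE nX) /=; apply/orP; right.
apply/existsP => [[w /existsP [z /and4P[Hw _ Cw _]]]].
have : (w == (kX,i)) || (w == (kV,i)).
  apply: (@connect_inv _ _ (fun z => (z == (kX,i)) || (z == (kV,i))) _ _ _ Cw); last by rewrite eqxx.
  move=> [k1 j1] [k2 j2]; rewrite /arc_minus !inE /arcP /= ?xpair_eqE.
  kb k1; kb k2; rewrite ?andbF ?andbT ?orbF //=.
  - by move=> /eqP E; rewrite E => /andP[/andP[/eqP <- _]]; rewrite eqxx.
  - by move=> /eqP -> /eqP <-.
by case/orP => /eqP E; move: Hw; rewrite E ?(negbTE nX) ?(negbTE nV).
Qed.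

Lemma ct_trans (T : finType) (D1 D2 D3 : digraph T) :
  contracts_to D1 D2 -> contracts_to D2 D3 -> contracts_to D1 D3.
Proof. elim=> // D x y D' H1 H2 _ IH H; exact: (ct_step H1 H2 (IH H)). Qed.

Lemma cardC_step (S : {set 'I_n}) i k : i \notin S -> #|~: S| = k.+1 -> #|~: (i |: S)| = k.
Proof.
move=> iS HS; have := cardsD1 i (~: S); rewrite HS inE iS add1n => [[->]].
by apply: eq_card => x; rewrite !inE negb_or andbC.
Qed.

Lemma ctY (R : {set 'I_n}) : forall S, contracts_to (Gd S R) (Gd setT R).
Proof.
suff H : forall k S, #|~: S| = k -> contracts_to (Gd S R) (Gd setT R) by move=> S; exact: (H _ S erefl).
elim=> [|k IH] S HS.
  have -> : S = setT.
    apply/setP => x; rewrite inE; have := card0_eq HS x; rewrite !inE /=.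
    by move/negbT; rewrite negbK.
  exact: ct_refl.
have [i] : exists i, i \in ~: S by apply/set0Pn; rewrite -card_gt0 HS.
rewrite inE => iS.
apply: (ct_step (x := (kA, i)) (y := (kY, i))).
- by rewrite inE /arcP /= eqxx iS /= ?orbT.
- exact: tcY.
rewrite contract_Y //; apply: IH; exact: cardC_step.
Qed.

Lemma ctX (S : {set 'I_n}) : forall R, contracts_to (Gd S R) (Gd S setT).
Proof.
suff H : forall k R, #|~: R| = k -> contracts_to (Gd S R) (Gd S setT) by move=> R; exact: (H _ R erefl).
elim=> [|k IH] R HR.
  have -> : R = setT.
    apply/setP => x; rewrite inE; have := card0_eq HR x; rewrite !inE /=.
    by move/negbT; rewrite negbK.
  exact: ct_refl.
have [i] : exists i, i \in ~: R by apply/set0Pn; rewrite -card_gt0 HR.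
rewrite inE => iR.
apply: (ct_step (x := (kX, i)) (y := (kB, i))).
- by rewrite inE /arcP /= eqxx iR /= ?orbT.
- exact: tcX.
rewrite contract_X //; apply: IH; exact: cardC_step.
Qed.

Lemma wfG S R : wf (Gd S R).
Proof.
apply/andP; split.
  apply/subsetP => [[[k1 j1] [k2 j2]]]; rewrite !inE /arcP /vP /=.
  kb k1; kb k2; rewrite ?andbF ?andbT ?orbF //=.
  1-3: by case/andP => /eqP ->.
apply/forallP => [[k j]]; rewrite inE /arcP /=; kb k.
Qed.

Lemma J_nomix u v w : (u, v) \in de (Gd set0 set0) -> (v, w) \in de (Gd set0 set0) -> False.
Proof.
case: u v w => [k1 j1] [k2 j2] [k3 j3]; rewrite !inE /arcP /=.
by kb k2; kb k1; kb k3; rewrite ?in_set0 /= ?andbF ?andbT ?orbF.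
Qed.

Lemma J_SV (Y : {set VT * VT}) : Y \subset de (Gd set0 set0) -> SV (de (Gd set0 set0)) Y = set0.
Proof.
move=> HY; apply/setP => v; rewrite in_set0; apply/negbTE/negP; rewrite inE => /existsP[u /existsP[w /andP[H1 H2]]].
move: H1; rewrite inE => /andP[_ H1].
exact: (J_nomix H1 (subsetP HY _ H2)).
Qed.

Lemma J_card : 0 < n -> 1 < #|de (Gd set0 set0)|.
Proof.
move=> n0; pose i := Ordinal n0.
have Hs : [set ((kA,i),(kY,i)); ((kW,i),(kY,i))] \subset de (Gd set0 set0).
  apply/subsetP => e; rewrite !inE; case/orP => /eqP ->; rewrite /arcP /= ?eqxx ?orbT ?in_set0 //.
apply: leq_trans (subset_leq_card Hs); by rewrite cards2.
Qed.

Definition EH := de (Gd setT setT).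
Definition CH (X : {set VT * VT}) := SV EH X :|: SV EH (EH :\: X).

Lemma SVP (E Y : {set VT * VT}) v :
  (v \in SV E Y) = [exists u, exists w, ((u, v) \in E :\: Y) && ((v, w) \in Y)].
Proof. by rewrite inE. Qed.

Lemma arcH_AX i j : ((kA,i),(kX,j)) \in EH.
Proof. by rewrite inE /arcP /= in_setT. Qed.
Lemma arcH_WA i : ((kW,i),(kA,i)) \in EH.
Proof. by rewrite inE /arcP /= eqxx in_setT ?orbT. Qed.
Lemma arcH_XV j : ((kX,j),(kV,j)) \in EH.
Proof. by rewrite inE /arcP /= eqxx ?orbT. Qed.

Lemma sideA (X : {set VT * VT}) i j : (kA,i) \notin CH X ->
  (((kA,i),(kX,j)) \in X) = (((kW,i),(kA,i)) \in X).
Proof.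
rewrite inE negb_or !SVP => /andP[H1 H2].
apply/idP/idP => [Hax|Hwa]; apply/negPn/negP => Hn.
- move/negP: H1; apply; apply/existsP; exists (kW,i); apply/existsP; exists (kX,j).
  by rewrite !in_setD Hn arcH_WA Hax.
- move/negP: H2; apply; apply/existsP; exists (kW,i); apply/existsP; exists (kX,j).
  by rewrite !in_setD Hn arcH_WA arcH_AX Hwa.
Qed.

Lemma sideX (X : {set VT * VT}) i j : (kX,j) \notin CH X ->
  (((kA,i),(kX,j)) \in X) = (((kX,j),(kV,j)) \in X).
Proof.
rewrite inE negb_or !SVP => /andP[H1 H2].
apply/idP/idP => [Hax|Hxv]; apply/negPn/negP => Hn.
- move/negP: H2; apply; apply/existsP; exists (kA,i); apply/existsP; exists (kV,j).
  by rewrite !in_setD Hn arcH_XV arcH_AX Hax.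
- move/negP: H1; apply; apply/existsP; exists (kA,i); apply/existsP; exists (kV,j).
  by rewrite !in_setD Hn arcH_AX Hxv.
Qed.

Definition rho (v : VT) : VT :=
  if v.1 == kW then (kA, v.2) else if v.1 == kV then (kX, v.2) else v.
Definition phi (e : VT * VT) := (rho e.1, rho e.2).

Lemma phi_inj : {in EH &, injective phi}.
Proof.
move=> [[k1 j1] [k2 j2]] [[k3 j3] [k4 j4]]; rewrite !inE /arcP /phi /rho /=.
kb k1; kb k2; rewrite ?in_setT ?andbF ?andbT ?orbF //=; kb k3; kb k4;
  rewrite ?in_setT ?andbF ?andbT ?orbF //=.
all: by move=> _ _ [-> ->]; congr (_, _, (_, _)); apply: val_inj.
Qed.

Lemma H_width (X : {set VT * VT}) : X \subset EH ->
  n <= #|CH X| \/ #|X| <= #|CH X| * #|CH X| \/ #|EH :\: X| <= #|CH X| * #|CH X|.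
Proof.
move=> HX; set C := CH X.
have ninj k : injective (fun i : 'I_n => (k, i) : VT) by move=> a b [].
case: (boolP [exists i, (kA,i) \notin C]) => [/existsP[i0 Hi0]|/existsPn HA]; last first.
  left; rewrite -{1}(card_ord n) -(card_imset _ (ninj kA)).
  apply: subset_leq_card; apply/subsetP => v /imsetP[i _ ->].
  by have := HA i; rewrite negbK.
case: (boolP [exists j, (kX,j) \notin C]) => [/existsP[j0 Hj0]|/existsPn HXX]; last first.
  left; rewrite -{1}(card_ord n) -(card_imset _ (ninj kX)).
  apply: subset_leq_card; apply/subsetP => v /imsetP[i _ ->].
  by have := HXX i; rewrite negbK.
right; set s := ((kA,i0),(kX,j0)) \in X.
have sA i : (kA,i) \notin C -> (((kW,i),(kA,i)) \in X) = s.
  by move=> Hi; rewrite -(sideA j0 Hi) (sideX i Hj0) -(sideX i0 Hj0).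
have sX j : (kX,j) \notin C -> (((kX,j),(kV,j)) \in X) = s.
  by move=> Hj; rewrite -(sideX i0 Hj) (sideA j Hi0) -(sideA j0 Hi0).
have key e : e \in EH -> (e \in X) != s -> phi e \in setX C C.
  case: e => [[k1 j1] [k2 j2]]; rewrite inE /arcP /=.
  kb k1; kb k2; rewrite ?in_setT ?andbF ?andbT ?orbF //=; fixk.
  - move=> _ Hne; rewrite /phi /rho /= in_setX; apply/andP; split; apply/negPn/negP => H.
      by move: Hne; rewrite (sideA j2 H) (sA j1 H) eqxx.
    by move: Hne; rewrite (sideX j1 H) (sX j2 H) eqxx.
  - move=> /eqP <- Hne; rewrite /phi /rho /= in_setX andbb; apply/negPn/negP => H.
    by move: Hne; rewrite (sA j1 H) eqxx.
  - move=> /eqP <- Hne; rewrite /phi /rho /= in_setX andbb; apply/negPn/negP => H.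
    by move: Hne; rewrite (sX j1 H) eqxx.
have bound (O : {set VT * VT}) : O \subset EH -> (forall e, e \in O -> (e \in X) != s) ->
    #|O| <= #|C| * #|C|.
  move=> HO Hs; rewrite -cardsX -(card_in_imset (f := phi)).
    apply: subset_leq_card; apply/subsetP => x /imsetP[e eO ->].
    by apply: key; [exact: (subsetP HO) | exact: Hs].
  by move=> a b aO bO; apply: phi_inj; apply: (subsetP HO).
case: (boolP s) => Hs; [right|left]; apply: bound.
- exact: subsetDl.
- by move=> e; rewrite in_setD => /andP[/negbTE -> _]; rewrite Hs.
- exact: HX.
- by move=> e ->; rewrite (negbTE Hs).
Qed.

End G.

Lemma dbw_le_any (T : finType) (D : digraph T) : 1 < #|de D| -> dbw_le D #|T|.
Proof.
move=> H; right; have [U [t [beta [Ht Hinj Him]]]] := caterpillar H.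
by exists U, t, beta; split => // a b _ /=; exact: max_card.
Qed.

Theorem mainTheorem12 :
  ~ exists g : nat -> nat,
      forall (T : finType) (J : digraph T), wf J ->
      forall (T' : finType) (H : digraph T'), wf H ->
        dtop_minor H J -> dbw H <= g (dbw J).
Proof.
case=> g Hg.
pose K := g 0.
pose n := (2 * K + 2).
have n0 : 0 < n by rewrite /n addn2.
pose J := @Gd n set0 set0. pose H := @Gd n setT setT.
have HJ : dbw J = 0.
  have [U [t [beta [Ht Hinj Him]]]] := caterpillar (J_card n0).
  have Hle : dbw_le J 0.
    right; exists U, t, beta; split => // a b _ /=.
    have HXs : beta @: side t a b \subset de J.
      by rewrite -Him; apply: imsetS; apply/subsetP => u; rewrite inE => /andP[].
    by rewrite !J_SV ?setU0 ?cards0 //; exact: subsetDl.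
  have [_ Hm] := dbw_spec Hle; apply/eqP; rewrite -leqn0; exact: Hm.
have Hdt : dtop_minor H J.
  exists J, H; split; first by rewrite /subgraph wfG !subxx.
  split; first exact: (ct_trans (ctY _ _) (ctX _ _)).
  exists id; split; [by move=> u v _ _ | by rewrite imset_id | by []].
have Hmin : dbw H <= K.
  by have := Hg _ J (wfG _ _) _ H (wfG _ _) Hdt; rewrite HJ.
have EHn : n * n <= #|de H|.
  pose f := fun p : 'I_n * 'I_n => ((kA, p.1), (kX, p.2)) : VT n * VT n.
  have finj : injective f by move=> [a b] [c d] /= [-> ->].
  have <- : #|f @: [set: 'I_n * 'I_n]| = n * n by rewrite card_imset // cardsT card_prod card_ord.
  apply: subset_leq_card; apply/subsetP => e /imsetP[p _ ->]; exact: arcH_AX.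
have H1 : 1 < #|de H| by apply: leq_trans EHn; rewrite /n; nia.
have [Hle _] := dbw_spec (dbw_le_any H1).
case: Hle => [E0|[U [t [beta [Ht Hinj Him Hw]]]]].
  by move: H1; rewrite E0 cards0.
have Hleaves : #|leaves t| = #|de H| by rewrite -Him card_in_imset.
apply: (@balance _ _ Ht (K * K)).
  by rewrite Hleaves; apply: leq_trans EHn; rewrite /n; nia.
move=> a b tab.
have Hw' := Hw a b tab; rewrite /= in Hw'.
have sideL : side t a b \subset leaves t by apply/subsetP => u; rewrite inE => /andP[].
have XE : beta @: side t a b \subset EH n by rewrite /EH -Him; apply: imsetS.
have HXc : #|beta @: side t a b| = #|side t a b|.
  by apply: card_in_imset => x y xs ys; apply: Hinj; apply: (subsetP sideL).
have HC : #|CH (beta @: side t a b)| <= K by apply: leq_trans Hw' Hmin.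
have HCC : #|CH (beta @: side t a b)| * #|CH (beta @: side t a b)| <= K * K by apply: leq_mul.
case: (H_width XE) => [Hn|[Hx|Hy]].
- by exfalso; move: (leq_trans Hn HC); rewrite /n; lia.
- by left; rewrite -HXc; apply: leq_trans Hx HCC.
- right; rewrite Hleaves -HXc.
  have : #|EH n :\: beta @: side t a b| = #|de H| - #|beta @: side t a b|.
    by rewrite cardsD (setIidPr XE).
  by move=> <-; apply: leq_trans Hy HCC.
Qed.
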